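(* Let $n\ge 2$, let $\mathcal I$ be the set of transpositions in the symmetric group $S_n$, and let $H$ be an abelian group. Then $S_n=\langle\mathcal I\rangle$ and for every $\tau_1,\tau_2\in\mathcal I$ there exists $t\in S_n$ with $t^2=\tau_1\tau_2$. Consequently $S_1(S_n,H)=S_{1,2}(S_n,H)\cong \mathrm{Hom}(S_n,H)$. Moreover, every $f\in S_1(S_n,H)$ is determined by a choice of $u\in H[2]$ and satisfies $f(\sigma)=0$ if $\sigma$ is even and $f(\sigma)=u$ if $\sigma$ is odd.
   Context: $H$ is written additively; $H[2]=\{h\in H:2h=0\}$. For a group $G$ with identity $e$, $S_1(G,H)$ is the set of $f:G\to H$ with $f(e)=0$ and $f(xy)+f(xy^{-1})=2f(x)$ for all $x,y\in G$; $S_{1,2}(G,H)$ is the subset of those also satisfying $f(xy)+f(x^{-1}y)=2f(y)$ for all $x,y\in G$. *)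

(* Defs.v *)
From HB Require Import structures.
From mathcomp Require Import all_boot all_order all_algebra all_fingroup.
Set Implicit Arguments. Unset Strict Implicit. Unset Printing Implicit Defensive.
Import GRing.Theory.
Local Open Scope ring_scope.

Definition S1 (G : finGroupType) (H : zmodType) (f : G -> H) : Prop :=
  f 1%g = 0 /\ forall x y : G, f (x * y)%g + f (x * y^-1)%g = f x *+ 2.

Definition S12 (G : finGroupType) (H : zmodType) (f : G -> H) : Prop :=
  S1 f /\ forall x y : G, f (x * y)%g + f (x^-1 * y)%g = f y *+ 2.

Definition is_hom (G : finGroupType) (H : zmodType) (f : G -> H) : Prop :=
  forall x y : G, f (x * y)%g = f x + f y.

Definition transpositions (n : nat) : {set 'S_n} :=
  [set s : 'S_n | [exists x : 'I_n, exists y : 'I_n, (x != y) && (s == tperm x y)]].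

(* Main.v *)
Require Import Defs.
From HB Require Import structures.
From mathcomp Require Import all_boot all_order all_algebra all_fingroup.
Import GRing.Theory.
Local Open Scope ring_scope.

Lemma tpermE' (T : finType) (x y z : T) :
  tperm x y z = if z == x then y else if z == y then x else z.
Proof.
case: tpermP => [->|->|/eqP zx /eqP zy]; rewrite ?eqxx //.
  by case: eqP => // ->.
by rewrite (negbTE zx) (negbTE zy).
Qed.

Lemma sq3 (T : finType) (a b c : T) : a != b -> b != c -> a != c ->
  ((tperm b c * tperm a b)^+2 = tperm a b * tperm b c)%g.
Proof.
move=> /negbTE ab /negbTE bc /negbTE ac.
have ba : (b == a) = false by rewrite eq_sym.
have cb : (c == b) = false by rewrite eq_sym.
have ca : (c == a) = false by rewrite eq_sym.
apply/permP => x; rewrite !expgS expg0 mulg1 !permM.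
case: (eqVneq x a) => [->|/negbTE xa]; first by rewrite !(tpermE', eqxx, ab, ba, bc, cb, ac, ca).
case: (eqVneq x b) => [->|/negbTE xb]; first by rewrite !(tpermE', eqxx, ab, ba, bc, cb, ac, ca).
case: (eqVneq x c) => [->|/negbTE xc]; first by rewrite !(tpermE', eqxx, ab, ba, bc, cb, ac, ca).
by rewrite !(tpermE', eqxx, ab, ba, bc, cb, ac, ca, xa, xb, xc).
Qed.
Lemma cube3 (T : finType) (a b c : T) : a != b -> b != c -> a != c ->
  ((tperm a b * tperm b c)^+3 = 1)%g.
Proof.
move=> /negbTE ab /negbTE bc /negbTE ac.
have ba : (b == a) = false by rewrite eq_sym.
have cb : (c == b) = false by rewrite eq_sym.
have ca : (c == a) = false by rewrite eq_sym.
apply/permP => x; rewrite !expgS expg0 mulg1 !permM perm1.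
case: (eqVneq x a) => [->|/negbTE xa]; first by rewrite !(tpermE', eqxx, ab, ba, bc, cb, ac, ca).
case: (eqVneq x b) => [->|/negbTE xb]; first by rewrite !(tpermE', eqxx, ab, ba, bc, cb, ac, ca).
case: (eqVneq x c) => [->|/negbTE xc]; first by rewrite !(tpermE', eqxx, ab, ba, bc, cb, ac, ca).
by rewrite !(tpermE', eqxx, ab, ba, bc, cb, ac, ca, xa, xb, xc).
Qed.
Lemma sq4 (T : finType) (a b c d : T) : a != b -> a != c -> a != d -> b != c -> b != d -> c != d ->
  ((tperm a c * tperm a b * tperm a d)^+2 = tperm a b * tperm c d)%g.
Proof.
move=> /negbTE ab /negbTE ac /negbTE ad /negbTE bc /negbTE bd /negbTE cd.
have ba : (b == a) = false by rewrite eq_sym.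
have cb : (c == b) = false by rewrite eq_sym.
have ca : (c == a) = false by rewrite eq_sym.
have da : (d == a) = false by rewrite eq_sym.
have db : (d == b) = false by rewrite eq_sym.
have dc : (d == c) = false by rewrite eq_sym.
apply/permP => x; rewrite !expgS expg0 mulg1 !permM.
case: (eqVneq x a) => [->|/negbTE xa]; first by rewrite !(tpermE', eqxx, ab, ba, bc, cb, ac, ca, ad, da, bd, db, cd, dc).
case: (eqVneq x b) => [->|/negbTE xb]; first by rewrite !(tpermE', eqxx, ab, ba, bc, cb, ac, ca, ad, da, bd, db, cd, dc).
case: (eqVneq x c) => [->|/negbTE xc]; first by rewrite !(tpermE', eqxx, ab, ba, bc, cb, ac, ca, ad, da, bd, db, cd, dc).
case: (eqVneq x d) => [->|/negbTE xd]; first by rewrite !(tpermE', eqxx, ab, ba, bc, cb, ac, ca, ad, da, bd, db, cd, dc).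
by rewrite !(tpermE', eqxx, ab, ba, bc, cb, ac, ca, ad, da, bd, db, cd, dc, xa, xb, xc, xd).
Qed.

Section Jensen.
Variables (G : finGroupType) (H : zmodType) (f : G -> H).
Hypothesis Sf : S1 f.

Lemma J_inv2 (x y : G) : (y^-1 = y)%g -> f (x * y)%g *+ 2 = f x *+ 2.
Proof. by move=> yV; case: Sf => _ /(_ x y); rewrite yV -mulr2n. Qed.

Lemma J_cube (x s : G) : (s ^+ 3 = 1)%g -> f (x * s)%g *+ 2 = f x *+ 2 ->
  f (x * s)%g = f x.
Proof.
move=> s3 h2sq.
have sV : (s * s = s^-1)%g.
  by apply: (mulIg s); rewrite mulVg -s3 !expgS expg0 mulg1 mulgA.
case: Sf => _ J.
have h1 := J (x * s)%g s; rewrite mulgK -mulgA sV in h1.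
have h2 := J x s.
have e : f (x * s^-1)%g = f x *+ 2 - f (x * s)%g by rewrite -h2 [f (x * s)%g + _]addrC addrK.
rewrite e in h1.
have h1' : f x *+ 2 + f x = f (x * s)%g *+ 2 + f (x * s)%g.
  by rewrite -h1 -[RHS]addrA [f x + _]addrC addrA subrK.
by rewrite h2sq in h1'; symmetry; exact: (addrI _ h1').
Qed.
End Jensen.

Section Perm.
Variables (T : finType) (H : zmodType) (f : {perm T} -> H).
Hypothesis Sf : S1 f.

Lemma J_three (x : {perm T}) (a b c : T) : a != b -> b != c -> a != c ->
  f (x * (tperm a b * tperm b c))%g = f x.
Proof.
move=> ab bc ac; apply: (@J_cube _ _ _ Sf); first exact: cube3.
by rewrite mulgA (@J_inv2 _ _ _ Sf _ _ (tpermV _ _)) (@J_inv2 _ _ _ Sf _ _ (tpermV _ _)).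
Qed.

Lemma J_pair (x : {perm T}) (a b c d : T) : a != b -> c != d ->
  f (x * (tperm a b * tperm c d))%g = f x.
Proof.
move=> ab cd.
case: (eqVneq a c) => [e|ac].
  subst c; case: (eqVneq b d) => [e|bd]; first by subst d; rewrite tperm2 mulg1.
  by rewrite (tpermC a b) J_three // eq_sym.
case: (eqVneq a d) => [e|ad].
  subst d; case: (eqVneq b c) => [e|bc]; first by subst c; rewrite (tpermC b a) tperm2 mulg1.
  by rewrite (tpermC a b) (tpermC c a) J_three // eq_sym.
case: (eqVneq b c) => [e|bc]; first by subst c; rewrite J_three.
case: (eqVneq b d) => [e|bd]; first by subst d; rewrite (tpermC c b) J_three // eq_sym.
have -> : (tperm a b * tperm c d = (tperm a b * tperm b c) * (tperm b c * tperm c d))%g.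
  by rewrite -mulgA (mulgA (tperm b c)) tperm2 mul1g.
by rewrite mulgA !J_three.
Qed.
End Perm.

Lemma S1_prod (T : finType) (H : zmodType) (f : {perm T} -> H) (Sf : S1 f)
  (i0 i1 : T) (i01 : i0 != i1) (ts : seq (T * T)) : all dpair ts ->
  forall x, f (x * \prod_(t <- ts) tperm t.1 t.2)%g
     = if odd (size ts) then f (x * tperm i0 i1)%g else f x.
Proof.
elim: ts => [|t ts IH] /=; first by move=> _ x; rewrite big_nil mulg1.
move=> /andP[dt dts] x; rewrite big_cons mulgA IH //.
case: (odd (size ts)) => /=.
  by rewrite -mulgA (@J_pair _ _ _ Sf).
have -> : (x * tperm t.1 t.2 = (x * tperm i0 i1) * (tperm i0 i1 * tperm t.1 t.2))%g.
  by rewrite mulgA -(mulgA x) tperm2 mulg1.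
by rewrite (@J_pair _ _ _ Sf).
Qed.

Theorem mainTheorem7 (n : nat) (H : zmodType) (hn : (2 <= n)%N) :
  (<<transpositions n>>%g = [set: 'S_n])
  /\ (forall t1 t2 : 'S_n, t1 \in transpositions n -> t2 \in transpositions n ->
        exists t : 'S_n, (t ^+ 2)%g = (t1 * t2)%g)
  /\ (forall f : 'S_n -> H, S1 f <-> S12 f)
  /\ (forall f : 'S_n -> H, S1 f <-> is_hom f)
  /\ (forall f : 'S_n -> H, S1 f ->
        exists u : H, u *+ 2 = 0 /\
          forall s : 'S_n, f s = (if odd_perm s then u else 0))
  /\ (forall u : H, u *+ 2 = 0 ->
        S1 (fun s : 'S_n => if odd_perm s then u else 0)).
Proof.
pose i0 : 'I_n := Ordinal (ltnW hn).
pose i1 : 'I_n := Ordinal hn.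
have i01 : i0 != i1 by [].
pose t0 := tperm i0 i1.
have char : forall f : 'S_n -> H, S1 f ->
    forall s, f s = if odd_perm s then f t0 else 0.
  move=> f Sf s; case: (prod_tpermP s) => ts -> dts.
  rewrite odd_perm_prod //.
  have := @S1_prod _ _ _ Sf _ _ i01 _ dts 1%g; rewrite !mul1g => ->.
  by case: (odd (size ts)); rewrite // Sf.1.
have u2 : forall f : 'S_n -> H, S1 f -> f t0 *+ 2 = 0.
  move=> f [f1 J]; have := J 1%g t0; rewrite !mul1g tpermV f1 mul0rn.
  by rewrite mulr2n.
have signS1 : forall u : H, u *+ 2 = 0 ->
    is_hom (fun s : 'S_n => if odd_perm s then u else 0).
  move=> u uu x y /=; rewrite odd_permM.
  by case: (odd_perm x); case: (odd_perm y); rewrite /= ?addr0 ?add0r // -mulr2n uu.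
have homS12 : forall f : 'S_n -> H, is_hom f -> S12 f.
  move=> f h.
  have f1 : f 1%g = 0.
    have e := h 1%g 1%g; rewrite mulg1 in e.
    by apply: (@addrI _ (f 1%g)); rewrite addr0 -e.
  have finv : forall y, f y + f y^-1%g = 0 by move=> y; rewrite -h mulgV f1.
  split; first split => // x y.
    by rewrite !h mulr2n addrACA finv addr0.
  by move=> x y; rewrite !h addrACA finv add0r mulr2n.
have hom_of_S1 : forall f : 'S_n -> H, S1 f -> is_hom f.
  move=> f Sf x y; rewrite (char f Sf (x * y)%g) (char f Sf x) (char f Sf y); exact: (signS1 _ (u2 f Sf) x y).
split.
  apply/eqP; rewrite eqEsubset subsetT /=; apply/subsetP => s _.
  case: (prod_tpermP s) => ts -> dts.
  elim: ts dts => [|t ts IH]; first by rewrite big_nil group1.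
  rewrite big_cons /= => /andP[dt dts]; rewrite groupM ?IH // mem_gen // inE.
  by apply/existsP; exists t.1; apply/existsP; exists t.2; rewrite dt eqxx.
split.
  move=> t1 t2; rewrite !inE => /existsP[a /existsP[b /andP[ab /eqP->]]].
  move=> /existsP[c /existsP[d /andP[cd /eqP->]]].
  case: (eqVneq a c) => [e|ac].
    subst c; case: (eqVneq b d) => [e|bd].
      by subst d; exists 1%g; rewrite tperm2 expg1n.
    rewrite (tpermC a b); eexists; apply: sq3 => //; by rewrite eq_sym.
  case: (eqVneq a d) => [e|ad].
    subst d; case: (eqVneq b c) => [e|bc].
      by subst c; exists 1%g; rewrite (tpermC b a) tperm2 expg1n.
    rewrite (tpermC a b) (tpermC c a); eexists; apply: sq3 => //; by rewrite eq_sym.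
  case: (eqVneq b c) => [e|bc].
    by subst c; eexists; apply: sq3.
  case: (eqVneq b d) => [e|bd].
    subst d; rewrite (tpermC c b); eexists; apply: sq3 => //; by rewrite eq_sym.
  by eexists; apply: sq4.
split.
  by move=> f; split=> [Sf|[]//]; apply: homS12; apply: hom_of_S1.
split.
  by move=> f; split=> [|h]; [apply: hom_of_S1 | exact: (homS12 f h).1].
split.
  by move=> f Sf; exists (f t0); split; [apply: u2 | apply: char].
by move=> u uu; exact: (homS12 _ (signS1 u uu)).1.
Qed.
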